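(* Let $G$ be a finite simple graph with $\tau(G) > 2\nu(G)$ such that every proper subgraph $H$ of $G$ satisfies $\tau(H) \leq 2\nu(H)$ (a minimal counterexample to Tuza's Conjecture). Then $G$ is robust.
   Context: $\nu(G)$ is the maximum number of pairwise edge-disjoint triangles in $G$; $\tau(G)$ is the minimum size of an edge set $Y$ with $G-Y$ triangle-free. A graph $G$ is robust if for every $v \in V(G)$, every connected component of the induced subgraph $G[N(v)]$ on the neighborhood of $v$ has at least $5$ vertices. *)

(* Defs.v *)
(* A finite simple graph G = (V, E) on a finite ambient type T:
   V : {set T} vertices, E : {set {set T}} edges, each edge a 2-subset of V. *)
From mathcomp Require Import all_boot.
Set Implicit Arguments. Unset Strict Implicit. Unset Printing Implicit Defensive.

Section Graphs.
Variable T : finType.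

Definition is_graph (V : {set T}) (E : {set {set T}}) : Prop :=
  forall e, e \in E -> e \subset V /\ #|e| = 2.

Definition triangleb (E : {set {set T}}) (t : {set T}) : bool :=
  (#|t| == 3) &&
  [forall x in t, forall y in t, (x != y) ==> ([set x; y] \in E)].

Definition tri_edges (t : {set T}) : {set {set T}} :=
  [set [set x; y] | x in t, y in t & x != y].

Definition tri_packing (E : {set {set T}}) (P : {set {set T}}) : bool :=
  [forall t in P, triangleb E t] &&
  [forall t1 in P, forall t2 in P,
     (t1 != t2) ==> [disjoint tri_edges t1 & tri_edges t2]].

Definition nu (E : {set {set T}}) : nat :=
  \max_(P : {set {set T}} | tri_packing E P) #|P|.

Definition triangle_free (E : {set {set T}}) : bool :=
  [forall t : {set T}, ~~ triangleb E t].

(* tau(G): minimum size of Y subset of E with G - Y triangle-free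
   (Y = E always works, so #|E| is a valid default for the minimum) *)
Definition tau (E : {set {set T}}) : nat :=
  \big[minn/#|E|]_(Y : {set {set T}} | (Y \subset E) && triangle_free (E :\: Y)) #|Y|.

Definition nbhd (V : {set T}) (E : {set {set T}}) (v : T) : {set T} :=
  [set u in V | [set u; v] \in E].

Definition nbhd_rel (V : {set T}) (E : {set {set T}}) (v : T) : rel T :=
  fun x y => [&& x \in nbhd V E v, y \in nbhd V E v & [set x; y] \in E].

Definition robust (V : {set T}) (E : {set {set T}}) : Prop :=
  forall v, v \in V -> forall u, u \in nbhd V E v ->
    5 <= #|[set w | connect (nbhd_rel V E v) u w]|.

End Graphs.

(* Main.v *)
Require Import Defs.
From mathcomp Require Import all_boot zify.
From Stdlib Require Import Classical.
Set Implicit Arguments. Unset Strict Implicit. Unset Printing Implicit Defensive.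

Section Aux.
Variable T : finType.

Lemma disjP (U : finType) (A B : {set U}) :
  reflect (forall x, x \in A -> x \in B -> False) [disjoint A & B].
Proof.
rewrite -setI_eq0; apply: (iffP eqP) => [H x xA xB | H].
- have Hx : x \in A :&: B by rewrite inE xA xB.
  by rewrite H inE in Hx.
- by apply/setP => x; rewrite !inE; apply/negP => /andP [] /H H1 /H1.
Qed.

Lemma tri_edgesP (t e : {set T}) : reflect (e \subset t /\ #|e| = 2) (e \in tri_edges t).
Proof.
apply: (iffP idP).
- case/imset2P => x y xt; rewrite inE => /andP[yt xy] ->.
  by rewrite subUset !sub1set xt yt cards2 xy.
- case=> sub /eqP /cards2P [x [y [xy Pe]]]; subst e.
  move: sub; rewrite subUset !sub1set => /andP [xt yt].
  by apply/imset2P; exists x y; rewrite // inE yt.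
Qed.

Lemma pair_tri (t : {set T}) x y : x \in t -> y \in t -> x != y -> [set x; y] \in tri_edges t.
Proof. by move=> xt yt xy; apply/tri_edgesP; rewrite subUset !sub1set xt yt cards2 xy. Qed.

Lemma triangleE (E : {set {set T}}) t :
  triangleb E t = (#|t| == 3) && (tri_edges t \subset E).
Proof.
rewrite /triangleb; case: (#|t| == 3) => //=.
apply/forall_inP/subsetP => [H e /tri_edgesP [] | H x xt].
- move=> sub /eqP/cards2P [x [y [xy Pe]]]; subst e.
  move: sub; rewrite subUset !sub1set => /andP [xt yt].
  by move/forall_inP: (H x xt) => /(_ y yt) /implyP /(_ xy).
- apply/forall_inP => y yt; apply/implyP => xy; apply: H.
  exact: pair_tri.
Qed.

Lemma tri_edges_ne (t : {set T}) : #|t| == 3 -> exists e, e \in tri_edges t.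
Proof.
move/eqP => t3; have : 1 < #|t| by rewrite t3.
case/card_gt1P => x [y [xt yt xy]]; exists [set x; y]; exact: pair_tri.
Qed.

Lemma nu_ge (E P : {set {set T}}) : tri_packing E P -> #|P| <= nu E.
Proof. by move=> HP; rewrite /nu; exact: (@leq_bigmax_cond _ (tri_packing E) (fun P => #|P|)). Qed.

Lemma nu_ex (E : {set {set T}}) : exists2 P, tri_packing E P & #|P| = nu E.
Proof.
rewrite /nu; apply: (big_ind (fun n => exists2 P, tri_packing E P & #|P| = n)).
- exists set0; last by rewrite cards0.
  by apply/andP; split; apply/forall_inP => t; rewrite inE.
- move=> m n [P1 h1 e1] [P2 h2 e2]; case: (leqP m n) => mn.
  + by exists P2; rewrite // (maxn_idPr mn).
  + by exists P1; rewrite // (maxn_idPl (ltnW mn)).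
- by move=> P HP; exists P.
Qed.

Lemma tau_le (E Y : {set {set T}}) : Y \subset E -> triangle_free (E :\: Y) -> tau E <= #|Y|.
Proof.
move=> s tf; rewrite /tau.
have := mem_index_enum Y.
elim: (index_enum _) => // a r IH; rewrite inE big_cons => /orP [/eqP <- | /IH].
- by rewrite s tf /= geq_minl.
- by case: ifP => // _ H; exact: leq_trans (geq_minr _ _) H.

Qed.

Lemma tau_ex (E : {set {set T}}) :
  exists Y : {set {set T}}, [/\ Y \subset E, triangle_free (E :\: Y) & #|Y| = tau E].
Proof.
rewrite /tau; apply: (big_ind (fun n => exists Y : {set {set T}}, [/\ Y \subset E, triangle_free (E :\: Y) & #|Y| = n])).
- exists E; split => //; apply/forallP => t; rewrite setDv triangleE.
  apply/negP => /andP [/tri_edges_ne [e He] /subsetP /(_ e He)]; by rewrite inE.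
- move=> m n [Y1 [a1 b1 c1]] [Y2 [a2 b2 c2]]; case: (leqP m n) => mn.
  + by exists Y1.
  + by exists Y2.
- by move=> Y0 /andP [a b]; exists Y0.
Qed.

Lemma key (V : {set T}) (E : {set {set T}}) (HG : is_graph V E)
  (Hcex : 2 * nu E < tau E)
  (Hmin : forall (V' : {set T}) (E' : {set {set T}}),
      V' \subset V -> E' \subset E -> is_graph V' E' ->
      (V', E') <> (V, E) -> tau E' <= 2 * nu E')
  (X Y P : {set {set T}}) :
  X \subset E -> (exists e, e \in X) -> Y \subset E -> #|Y| <= 2 * #|P| ->
  tri_packing E P -> (forall t, t \in P -> tri_edges t \subset X) ->
  (forall t, triangleb E t -> forall e, e \in X -> e \subset t ->
      exists2 f, f \in Y & f \subset t) ->
  False.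
Proof.
move=> XE [e0 e0X] YE cardY HP PX hit.
set H := E :\: X.
have HH : tau H <= 2 * nu H.
  apply: Hmin => //; first exact: subsetDl.
  - by move=> e /setDP [/HG].
  - case=> HE; have : e0 \in H by rewrite HE (subsetP XE).
    by rewrite inE e0X.
have nuE : nu H + #|P| <= nu E.
  have [Q HQ <-] := nu_ex H.
  case/andP: HQ => /forall_inP HQ1 /forall_inP HQ2.
  case/andP: HP => /forall_inP HP1 /forall_inP HP2.
  have QH t : t \in Q -> tri_edges t \subset H.
    by move/HQ1; rewrite triangleE => /andP [].
  have disj : [disjoint Q & P].
    apply/disjP => t tQ tP.
    have := HQ1 _ tQ; rewrite triangleE => /andP [/tri_edges_ne [e He] _].
    have := subsetP (QH _ tQ) _ He; rewrite inE (subsetP (PX _ tP)) //.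
  have HQP : tri_packing E (Q :|: P).
    apply/andP; split; apply/forall_inP => t1.
    - case/setUP => [/HQ1 | /HP1] //.
      rewrite !triangleE => /andP [-> s] /=.
      exact: subset_trans s (subsetDl _ _).
    - move=> h1; apply/forall_inP => t2 h2; apply/implyP => ne.
      case/setUP: h1 => h1; case/setUP: h2 => h2.
      + by move/forall_inP: (HQ2 _ h1) => /(_ _ h2) /implyP /(_ ne).
      + apply/disjP => e e1 e2; have := subsetP (QH _ h1) _ e1.
        by rewrite inE (subsetP (PX _ h2)).
      + apply/disjP => e e1 e2; have := subsetP (QH _ h2) _ e2.
        by rewrite inE (subsetP (PX _ h1)).
      + by move/forall_inP: (HP2 _ h1) => /(_ _ h2) /implyP /(_ ne).
  have := nu_ge HQP; rewrite cardsU.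
  move: disj; rewrite -setI_eq0 => /eqP ->; rewrite cards0 subn0 //.
have [Z [ZH Zf Zc]] := tau_ex H.
have tauE : tau E <= #|Z :|: Y|.
  apply: tau_le.
  - rewrite subUset YE andbT; exact: subset_trans ZH (subsetDl _ _).
  - apply/forallP => t; apply/negP; rewrite triangleE => /andP [t3 tsub].
    have tE : triangleb E t.
      rewrite triangleE t3; exact: subset_trans tsub (subsetDl _ _).
    case: (pickP (fun e => (e \in X) && (e \in tri_edges t))) => [e /andP [eX et] | none].
    + have [esub _] := tri_edgesP _ _ et.
      have [f fY fsub] := hit t tE e eX esub.
      have fE := subsetP YE _ fY.
      have [_ f2] := HG _ fE.
      have ft : f \in tri_edges t by apply/tri_edgesP.
      by have := subsetP tsub _ ft; rewrite !inE fY orbT.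
    + move/forallP: Zf => /(_ t); rewrite triangleE t3 /= => /negP; apply.
      apply/subsetP => e et; have := subsetP tsub _ et; rewrite !inE negb_or.
      case/andP => /andP [-> _] ->; rewrite andbT /=.
      by have := none e; rewrite et andbT => ->.
have := cardsU Z Y; have := leq_subr #|Z :&: Y| (#|Z| + #|Y|).
move=> h1 h2; have h3 : tau E <= #|Z| + #|Y| by rewrite -h2 in h1; exact: leq_trans tauE h1.
rewrite Zc in h3; clear -h3 HH nuE Hcex cardY; lia.
Qed.

End Aux.
Section Aux2.
Variable T : finType.
Lemma trich (E : {set {set T}}) (C : {set T})
  (Hirr : forall x y, [set x;y] \in E -> x <> y) :
  (forall x y, x \in C -> y \in C -> [set x;y] \notin E) \/
  (exists a b c d, [/\ a \in C, b \in C, c \in C & d \in C] /\ [set a;b] \in E /\ [set c;d] \in E /\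
     [/\ a <> c, a <> d, b <> c & b <> d]) \/
  (exists a b z, [/\ a \in C, b \in C, z \in C, [set a;b] \in E &
     forall x y, x \in C -> y \in C -> [set x;y] \in E ->
       (x = a /\ y = b) \/ (x = b /\ y = a) \/ x = z \/ y = z]).
Proof.
destruct (classic (exists a b, a \in C /\ b \in C /\ [set a;b] \in E)) as [[a [b [aC [bC ab]]]] | HA]; last first.
  by left => x y xC yC; apply/negP => xy; apply: HA; exists x, y.
right; destruct (classic (exists a b c d, [/\ a \in C, b \in C, c \in C & d \in C] /\ [set a;b] \in E /\ [set c;d] \in E /\
     [/\ a <> c, a <> d, b <> c & b <> d])) as [HB|HB]; first by left.
right.
have nB : forall a b c d, a \in C -> b \in C -> c \in C -> d \in C -> [set a;b] \in E -> [set c;d] \in E ->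
    a = c \/ a = d \/ b = c \/ b = d.
  move=> a0 b0 c0 d0 h1 h2 h3 h4 h5 h6; apply: NNPP => H; apply: HB; exists a0, b0, c0, d0.
  by do !split => //; move=> ?; apply: H; tauto.
have sym : forall x y, [set x;y] \in E -> [set y;x] \in E by move=> x y; rewrite setUC.
pose Q z := forall x y, x \in C -> y \in C -> [set x;y] \in E ->
       (x = a /\ y = b) \/ (x = b /\ y = a) \/ x = z \/ y = z.
destruct (classic (Q a)) as [Qa|Qa]; first by exists a, b, a.
destruct (classic (Q b)) as [Qb|Qb]; first by exists a, b, b.
have [x [y [xC [yC [xy Hn]]]]] : exists x y, x \in C /\ y \in C /\ [set x;y] \in E /\
   ~((x = a /\ y = b) \/ (x = b /\ y = a) \/ x = a \/ y = a).
  by apply: NNPP => H; apply: Qa => x y xC yC xy; apply: NNPP => H2; apply: H; exists x, y.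
have [x' [y' [xC' [yC' [xy' Hn']]]]] : exists x y, x \in C /\ y \in C /\ [set x;y] \in E /\
   ~((x = a /\ y = b) \/ (x = b /\ y = a) \/ x = b \/ y = b).
  by apply: NNPP => H; apply: Qb => x0 y0 x0C y0C xy0; apply: NNPP => H2; apply: H; exists x0, y0.
have hab := Hirr _ _ ab.
have [c [cC [bc [ca cb]]]] : exists c, c \in C /\ [set b;c] \in E /\ c <> a /\ c <> b.
  have hxy := Hirr _ _ xy.
  case: (nB a b x y aC bC xC yC ab xy) => [e|[e|[e|e]]].
  - by exfalso; apply: Hn; right; right; left.
  - by exfalso; apply: Hn; right; right; right.
  - exists y; rewrite e; do !split => //; first by move=> ?; apply: Hn; right; right; right.
    by move=> ?; apply: hxy; congruence.
  - exists x; rewrite e; do !split => //; first by apply: sym.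
    by move=> ?; apply: Hn; right; right; left.
have [d [dC [ad [da db]]]] : exists d, d \in C /\ [set a;d] \in E /\ d <> a /\ d <> b.
  have hxy := Hirr _ _ xy'.
  case: (nB b a x' y' bC aC xC' yC' (sym _ _ ab) xy') => [e|[e|[e|e]]].
  - by exfalso; apply: Hn'; right; right; left.
  - by exfalso; apply: Hn'; right; right; right.
  - exists y'; rewrite e; do !split => //; last by move=> ?; apply: Hn'; right; right; right.
    by move=> ?; apply: hxy; congruence.
  - exists x'; rewrite e; do !split => //; first by apply: sym.
    by move=> ?; apply: Hn'; right; right; left.
have dc : d = c.
  case: (nB a d b c aC dC bC cC ad bc) => [e|[e|[e|e]]] //; congruence.
subst d.
exists a, b, c; split => // x0 y0 x0C y0C x0y0.
have h0 := Hirr _ _ x0y0.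
case: (nB x0 y0 b c x0C y0C bC cC x0y0 bc) => [e1|[e1|[e1|e1]]]; try tauto;
case: (nB x0 y0 a c x0C y0C aC cC x0y0 ad) => [e2|[e2|[e2|e2]]]; try tauto; congruence.
Qed.
End Aux2.
Section Aux3.
Variable T : finType.

Lemma cardU1r (A : {set T}) x : x \notin A -> #|A :|: [set x]| = #|A|.+1.
Proof. by move=> xA; rewrite setUC cardsU1 xA. Qed.

Lemma cardU1le (A : {set T}) x : #|A :|: [set x]| <= #|A|.+1.
Proof. by rewrite setUC cardsU1; case: (x \notin A). Qed.

Lemma card3 (p q r : T) : p != q -> p != r -> q != r -> #|[set p; q; r]| = 3.
Proof.
move=> pq pr qr; rewrite cardU1r ?cards2 ?pq // !inE negb_or.
by rewrite eq_sym pr eq_sym qr.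
Qed.

Lemma card4 (p q r s : T) : p != q -> p != r -> p != s -> q != r -> q != s -> r != s ->
  #|[set p; q; r; s]| = 4.
Proof.
move=> pq pr ps qr qs rs; rewrite cardU1r ?card3 // !inE !negb_or.
by rewrite ![s == _]eq_sym ps qs rs.
Qed.

Lemma sub2 (x y : T) (t : {set T}) : x \in t -> y \in t -> [set x; y] \subset t.
Proof. by move=> xt yt; rewrite subUset !sub1set xt yt. Qed.

Lemma pair3 (t : {set T}) p q r x y : x \in [set p; q; r] -> y \in [set p; q; r] ->
  x != y -> x \in t -> y \in t ->
  [\/ p \in t /\ q \in t, p \in t /\ r \in t | q \in t /\ r \in t].
Proof.
rewrite !inE => hx hy xy xt yt.
case/orP: hx => [/orP[]|] /eqP ?; case/orP: hy => [/orP[]|] /eqP ?; subst;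
  first [ by rewrite eqxx in xy | by apply: Or31 | by apply: Or32 | by apply: Or33 ].
Qed.

Lemma tri3 (E : {set {set T}}) (p q r : T) : p != q -> p != r -> q != r ->
  [set p; q] \in E -> [set p; r] \in E -> [set q; r] \in E -> triangleb E [set p; q; r].
Proof.
move=> pq pr qr Epq Epr Eqr; rewrite triangleE card3 //=.
apply/subsetP => e /tri_edgesP [s /eqP/cards2P [x [y [xy ee]]]]; subst e.
move: s; rewrite subUset !sub1set !inE => /andP [hx hy].
case/orP: hx => [/orP[]|] /eqP ?; case/orP: hy => [/orP[]|] /eqP ?; subst;
  first [ by rewrite eqxx in xy | done | by rewrite setUC ].
Qed.

Lemma disj_tri (t1 t2 : {set T}) v :
  (forall x, x \in t1 -> x \in t2 -> x = v) -> [disjoint tri_edges t1 & tri_edges t2].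
Proof.
move=> H; apply/disjP => e /tri_edgesP [s1 /eqP/cards2P [x [y [xy ee]]]] /tri_edgesP [s2 _].
subst e; move: s1 s2; rewrite !subUset !sub1set => /andP [x1 y1] /andP [x2 y2].
by move: xy; rewrite (H x x1 x2) (H y y1 y2) eqxx.
Qed.

Lemma packing0 (E : {set {set T}}) : tri_packing E set0.
Proof. by apply/andP; split; apply/forall_inP => t; rewrite inE. Qed.

Lemma packing1 (E : {set {set T}}) t : triangleb E t -> tri_packing E [set t].
Proof.
move=> tE; apply/andP; split; apply/forall_inP => s; rewrite inE => /eqP -> //.
apply/forall_inP => s'; rewrite inE => /eqP ->; by rewrite eqxx.
Qed.

Lemma packing2 (E : {set {set T}}) t1 t2 : triangleb E t1 -> triangleb E t2 ->
  [disjoint tri_edges t1 & tri_edges t2] -> tri_packing E [set t1; t2].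
Proof.
move=> h1 h2 d; apply/andP; split; apply/forall_inP => s; rewrite !inE => /orP [] /eqP -> //;
apply/forall_inP => s'; rewrite !inE => /orP [] /eqP -> ; rewrite ?eqxx //=;
apply/implyP => _ //; by rewrite disjoint_sym.
Qed.

End Aux3.

Theorem lemma2p6 (T : finType) (V : {set T}) (E : {set {set T}})
  (HG : is_graph V E)
  (Hcex : 2 * nu E < tau E)
  (Hmin : forall (V' : {set T}) (E' : {set {set T}}),
      V' \subset V -> E' \subset E -> is_graph V' E' ->
      (V', E') <> (V, E) -> tau E' <= 2 * nu E') :
  robust V E.
Proof.
move=> v vV u uN.
set C := [set w | connect (nbhd_rel V E v) u w].
rewrite leqNgt; apply/negP => small.
have Hirr : forall x y, [set x;y] \in E -> x <> y.
  move=> x y /HG [_]; case: (eqVneq x y) => [-> | /eqP //]; by rewrite setUid cards1.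
have Hirr' : forall x y, [set x;y] \in E -> x != y by move=> x y /Hirr /eqP.
have nbP : forall x, x \in nbhd V E v -> x \in V /\ [set v; x] \in E.
  by move=> x; rewrite inE setUC => /andP [].
have pathN : forall p x, x \in nbhd V E v -> path (nbhd_rel V E v) x p ->
    last x p \in nbhd V E v.
  elim=> [|y p IH] x xN //=; case/andP => /and3P [_ yN _]; exact: IH.
have HCn : forall x, x \in C -> x \in V /\ [set v; x] \in E.
  move=> x; rewrite inE => /connectP [p pth ->]; apply: nbP; exact: pathN.
have HC2 : forall x y, x \in C -> y \in V -> [set v; y] \in E -> [set x; y] \in E -> y \in C.
  move=> x y xC yV vy xy; move: (xC); rewrite !inE => cx.
  apply: connect_trans cx (connect1 _); apply/and3P; split => //.
  - by have [xV vx] := HCn x xC; rewrite inE xV setUC.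
  - by rewrite inE yV setUC.
have uC : u \in C by rewrite inE connect0.
have vC : v \notin C by apply/negP => /HCn [_] /Hirr.
have vne : forall a, a \in C -> v != a.
  by move=> a aC; apply: contraNneq vC => ->.
have third : forall t a, triangleb E t -> v \in t -> a \in t -> a \in C ->
    exists w, [/\ w \in t, w \in C, w != a & [set a; w] \in E].
  move=> t a tE vt ta aC.
  move: (tE); rewrite triangleE => /andP [/eqP t3 tsub].
  have va := vne a aC.
  have : ~~ (t \subset [set v; a]).
    by apply/negP => /subset_leq_card; rewrite t3 cards2 va.
  case/subsetPn => w wt; rewrite !inE negb_or => /andP [wv wa].
  have Ew x y : x \in t -> y \in t -> x != y -> [set x; y] \in E.
    by move=> xt yt xy; apply: (subsetP tsub); apply: pair_tri.
  exists w; split => //; last by apply: Ew; rewrite // eq_sym.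
  have vw : [set v; w] \in E by apply: Ew; rewrite // eq_sym.
  apply: (HC2 a) => //; last by apply: Ew; rewrite // eq_sym.
  have [s _] := HG _ vw; apply: (subsetP s); by rewrite !inE eqxx orbT.
case: (trich C Hirr) => [HA | [HB | HCc]].
-
  apply: (@key _ V E HG Hcex Hmin [set [set v; u]] set0 set0).
  + by rewrite sub1set; case: (HCn u uC).
  + by exists [set v; u]; rewrite inE.
  + exact: sub0set.
  + by rewrite cards0.
  + exact: packing0.
  + by move=> t; rewrite inE.
  + move=> t tE e; rewrite inE => /eqP ->; rewrite subUset !sub1set => /andP [vt ut].
    have [w [wt wC _ uw]] := third t u tE vt ut uC.
    by move: (HA u w uC wC); rewrite uw.
-
  case: HB => a [b [c [d [[aC bC cC dC] [ab [cd [ac ad bc bd]]]]]]].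
  have ab' := Hirr' _ _ ab; have cd' := Hirr' _ _ cd.
  have ac' : a != c by apply/eqP. have ad' : a != d by apply/eqP.
  have bc' : b != c by apply/eqP. have bd' : b != d by apply/eqP.
  have Cfull : forall x, x \in C -> [\/ x = a, x = b, x = c | x = d].
    have sub : [set a; b; c; d] \subset C.
      by apply/subsetP => x /setUP [/setUP [/setUP [] | ] | ] /set1P ->.
    have /eqP CE : [set a; b; c; d] == C.
      by rewrite eqEcard sub card4 //=.
    move=> x; rewrite -CE !inE => /orP [/orP [/orP [] | ] | ] /eqP ->;
      [exact: Or41 | exact: Or42 | exact: Or43 | exact: Or44].
  have vE : forall x, x \in C -> [set v; x] \in E by move=> x /HCn [].
  set t1 := [set v; a; b]; set t2 := [set v; c; d].
  have t1E : triangleb E t1 by apply: tri3; rewrite ?vne ?vE.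
  have t2E : triangleb E t2 by apply: tri3; rewrite ?vne ?vE.
  have t1s : tri_edges t1 \subset E by move: t1E; rewrite triangleE => /andP [].
  have t2s : tri_edges t2 \subset E by move: t2E; rewrite triangleE => /andP [].
  have t12 : t1 != t2.
    apply/negP => /eqP e; have : a \in t2 by rewrite -e !inE eqxx orbT.
    by rewrite !inE eq_sym (negbTE (vne a aC)) (negbTE ac') (negbTE ad').
  apply: (@key _ V E HG Hcex Hmin (tri_edges t1 :|: tri_edges t2)
            [set [set a; b]; [set c; d]; [set v; a]; [set v; b]] [set t1; t2]).
  + by rewrite subUset t1s t2s.
  + have t1c : #|t1| == 3 by move: t1E; rewrite triangleE => /andP [].
    have [e He] := tri_edges_ne t1c.
    by exists e; rewrite inE He.
  + apply/subsetP => f; rewrite !inE => /orP [/orP [/orP [] | ] | ] /eqP -> //; exact: vE.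
  + rewrite cards2 t12 /=.
    apply: leq_trans (cardU1le _ _) _; rewrite ltnS.
    apply: leq_trans (cardU1le _ _) _; rewrite ltnS cards2; by case: (_ != _).
  + apply: packing2 => //; apply: (disj_tri (v := v)) => x; rewrite !inE.
    move=> /orP [/orP [] | ] /eqP -> //.
    * by rewrite (negbTE ac') (negbTE ad') eq_sym (negbTE (vne a aC)).
    * by rewrite (negbTE bc') (negbTE bd') eq_sym (negbTE (vne b bC)).
  + move=> t; rewrite !inE => /orP [] /eqP ->.
    * exact: subsetUl.
    * exact: subsetUr.
  + move=> t tE e; rewrite inE => /orP [] /tri_edgesP [esub /eqP /cards2P [x [y [xy ee]]]];
      subst e; rewrite subUset !sub1set => /andP [xt yt];
      move: esub; rewrite subUset !sub1set => /andP [xin yin];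
      case: (pair3 xin yin xy xt yt) => [[h1 h2] | [h1 h2] | [h1 h2]].
    * by exists [set v; a]; [rewrite !inE eqxx !orbT | exact: sub2].
    * by exists [set v; b]; [rewrite !inE eqxx !orbT | exact: sub2].
    * by exists [set a; b]; [rewrite !inE eqxx | exact: sub2].
    * have [w [wt wC wc _]] := third t c tE h1 h2 cC.
      case: (Cfull w wC) => ew; subst w.
      -- by exists [set v; a]; [rewrite !inE eqxx !orbT | exact: sub2].
      -- by exists [set v; b]; [rewrite !inE eqxx !orbT | exact: sub2].
      -- by rewrite eqxx in wc.
      -- by exists [set c; d]; [rewrite !inE eqxx !orbT | exact: sub2].
    * have [w [wt wC wd _]] := third t d tE h1 h2 dC.
      case: (Cfull w wC) => ew; subst w.
      -- by exists [set v; a]; [rewrite !inE eqxx !orbT | exact: sub2].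
      -- by exists [set v; b]; [rewrite !inE eqxx !orbT | exact: sub2].
      -- by exists [set c; d]; [rewrite !inE eqxx !orbT | exact: sub2].
      -- by rewrite eqxx in wd.
    * by exists [set c; d]; [rewrite !inE eqxx !orbT | exact: sub2].
- (* star or triangle *)
  case: HCc => a [b [z [aC bC zC ab Hz]]].
  have ab' := Hirr' _ _ ab.
  have vE : forall x, x \in C -> [set v; x] \in E by move=> x /HCn [].
  set t0 := [set v; a; b].
  have t0E : triangleb E t0 by apply: tri3; rewrite ?vne ?vE.
  apply: (@key _ V E HG Hcex Hmin (tri_edges t0) [set [set a; b]; [set v; z]] [set t0]).
  + by move: t0E; rewrite triangleE => /andP [].
  + by apply: tri_edges_ne; move: t0E; rewrite triangleE => /andP [].
  + apply/subsetP => f; rewrite !inE => /orP [] /eqP -> //; exact: vE.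
  + by rewrite cards1 cards2; case: (_ != _).
  + exact: packing1.
  + by move=> t; rewrite inE => /eqP ->.
  + move=> t tE e /tri_edgesP [esub /eqP /cards2P [x [y [xy ee]]]];
      subst e; rewrite subUset !sub1set => /andP [xt yt];
      move: esub; rewrite subUset !sub1set => /andP [xin yin].
    have hab : a \in t -> b \in t -> exists2 f, f \in [set [set a; b]; [set v; z]] & f \subset t.
      by move=> h1 h2; exists [set a; b]; [rewrite !inE eqxx | exact: sub2].
    have hvz : v \in t -> z \in t -> exists2 f, f \in [set [set a; b]; [set v; z]] & f \subset t.
      by move=> h1 h2; exists [set v; z]; [rewrite !inE eqxx !orbT | exact: sub2].
    case: (pair3 xin yin xy xt yt) => [[h1 h2] | [h1 h2] | [h1 h2]].
    * have [w [wt wC wa aw]] := third t a tE h1 h2 aC.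
      case: (Hz a w aC wC aw) => [[_ e] | [[e1 e2] | [e | e]]]; subst.
      -- exact: hab.
      -- by rewrite eqxx in ab'.
      -- exact: hvz.
      -- exact: hvz.
    * have [w [wt wC wb bw]] := third t b tE h1 h2 bC.
      case: (Hz b w bC wC bw) => [[e1 e2] | [[_ e] | [e | e]]]; subst.
      -- by rewrite eqxx in ab'.
      -- exact: hab.
      -- exact: hvz.
      -- exact: hvz.
    * exact: hab.
Qed.
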